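(* Let $(E,\|\cdot\|)$ be a non-archimedean Banach space over $K$ which has a finite maximal orthogonal subset, and let $X=\{a_1,\dots,a_m\}\subseteq E$ be a maximal orthogonal subset. Put $t_i=\|a_i\|$ for $i=1,\dots,m$. Then there exists a $K$-linear isometry $$T:E\to ((K^{\vee})^m,|\cdot|_{t_1}\times\cdots\times|\cdot|_{t_m})$$ such that $T(a_i)=e_i$ for $i=1,\dots,m$, where $e_1,\dots,e_m\in (K^\vee)^m$ are the canonical unit vectors.
   Context: $K$ is a complete non-archimedean non-trivially valued field which is not spherically complete. $K^{\vee}$ is a fixed spherically complete valued field which is an immediate extension of $K$ (for each nonzero $x\in K^\vee$ there is $d\in K$ with $|x-d|<|x|$). For $t>0$, $(K^\vee,|\cdot|_t)$ denotes $K^\vee$ regarded as a $K$-normed space with norm $|x|_t=t|x|$, and $((K^{\vee})^m,|\cdot|_{t_1}\times\cdots\times|\cdot|_{t_m})$ is the direct sum of $(K^\vee,|\cdot|_{t_i})$ with the max norm $\|(x_1,\dots,x_m)\|=\max_i t_i|x_i|$. A subset $X\subseteq E\setminus\{0\}$ is orthogonal if $\|\sum_i\lambda_ix_i\|=\max_i\|\lambda_ix_i\|$ for all finite $\{x_1,\dots,x_n\}\subseteq X$ and $\lambda_i\in K$. *)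

(* Defs.v *)
From HB Require Import structures.
From mathcomp Require Import all_boot all_order all_algebra.
From mathcomp Require Import reals.
Set Implicit Arguments. Unset Strict Implicit. Unset Printing Implicit Defensive.
Import Order.TTheory GRing.Theory Num.Theory.
Local Open Scope ring_scope.

Definition nonarch_abs (R : realType) (F : fieldType) (abs : F -> R) : Prop :=
  [/\ (forall x, 0 <= abs x),
      (forall x, abs x = 0 <-> x = 0),
      (forall x y, abs (x * y) = abs x * abs y) &
      (forall x y, abs (x + y) <= Num.max (abs x) (abs y))].

Definition nontrivial_abs (R : realType) (F : fieldType) (abs : F -> R) : Prop :=
  exists x, abs x <> 0 /\ abs x <> 1.

Definition complete_wrt (R : realType) (V : zmodType) (d : V -> R) : Prop :=
  forall u : nat -> V,
    (forall e : R, 0 < e -> exists N, forall p q, (N <= p)%N -> (N <= q)%N ->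
        d (u p - u q) < e) ->
    exists l : V, forall e : R, 0 < e -> exists N, forall n, (N <= n)%N ->
        d (u n - l) < e.

Definition cball (R : realType) (F : fieldType) (abs : F -> R) (c : F) (r : R) : F -> Prop :=
  fun x => abs (x - c) <= r.

Definition spherically_complete (R : realType) (F : fieldType) (abs : F -> R) : Prop :=
  forall (I : Type) (c : I -> F) (r : I -> R),
    inhabited I ->
    (forall i, 0 <= r i) ->
    (forall i j, (forall x, cball abs (c i) (r i) x -> cball abs (c j) (r j) x) \/
                 (forall x, cball abs (c j) (r j) x -> cball abs (c i) (r i) x)) ->
    exists x, forall i, cball abs (c i) (r i) x.

Definition nonarch_norm (R : realType) (K : fieldType) (absK : K -> R)
    (E : lmodType K) (nrm : E -> R) : Prop :=
  [/\ (forall x, 0 <= nrm x),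
      (forall x, nrm x = 0 <-> x = 0),
      (forall (l : K) x, nrm (l *: x) = absK l * nrm x) &
      (forall x y, nrm (x + y) <= Num.max (nrm x) (nrm y))].

Definition orthogonal (R : realType) (K : fieldType) (E : lmodType K)
    (nrm : E -> R) (X : E -> Prop) : Prop :=
  (forall x, X x -> x <> 0) /\
  forall (n : nat) (x : 'I_n -> E) (l : 'I_n -> K),
    injective x -> (forall i, X (x i)) ->
    nrm (\sum_(i < n) l i *: x i) = \big[Num.max/0]_(i < n) nrm (l i *: x i).

Definition maximal_orthogonal (R : realType) (K : fieldType) (E : lmodType K)
    (nrm : E -> R) (X : E -> Prop) : Prop :=
  orthogonal nrm X /\
  forall Y : E -> Prop, orthogonal nrm Y -> (forall x, X x -> Y x) ->
    forall x, Y x -> X x.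

(* Main.v *)
Require Import Defs.
From HB Require Import structures.
From mathcomp Require Import all_boot all_order all_algebra.
From mathcomp Require Import reals.
From mathcomp Require Import boolp classical_sets functions.
From mathcomp Require Import ring lra.
Import Order.TTheory GRing.Theory Num.Theory.
Local Open Scope ring_scope.

Set Warnings "-notation-overridden -ambiguous-paths".
Set Implicit Arguments. Unset Strict Implicit. Unset Printing Implicit Defensive.

Section Ultra.
Variables (R : realType) (V : zmodType) (N : V -> R).
Hypothesis NN : forall x, N (- x) = N x.
Hypothesis NU : forall x y, N (x + y) <= Num.max (N x) (N y).

Lemma um_strict x y : N y < N x -> N (x + y) = N x.
Proof.
move=> lt; apply/le_anti/andP; split.
  by apply: le_trans (NU x y) _; rewrite ge_max lexx ltW.
have := NU (x + y) (- y); rewrite addrK NN le_max => /orP[//|h].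
by move: (lt_le_trans lt h); rewrite ltxx.
Qed.

Lemma um_sym x y : N (x - y) = N (y - x).
Proof. by rewrite -NN opprB. Qed.

Lemma um_sum (I : Type) (r : seq I) (P : pred I) (F : I -> V) :
  N 0 = 0 -> N (\sum_(i <- r | P i) F i) <= \big[Num.max/0]_(i <- r | P i) N (F i).
Proof.
move=> N0; apply: (big_ind2 (fun s mx => N s <= mx)); first by rewrite N0.
  move=> s1 m1 s2 m2 h1 h2; apply: le_trans (NU _ _) _.
  by rewrite ge_max !le_max h1 h2 orbT.
by [].
Qed.
End Ultra.
Section Main.
Variables (R : realType) (K : fieldType) (absK : K -> R).
Hypothesis hK : nonarch_abs absK.
Variables (Kv : fieldType) (absv : Kv -> R) (iota : {rmorphism K -> Kv}).
Hypothesis hKv : nonarch_abs absv.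
Hypothesis hKvsc : spherically_complete absv.
Hypothesis hiota : forall d : K, absv (iota d) = absK d.
Variables (E : lmodType K) (nrm : E -> R).
Hypothesis hE : nonarch_norm absK nrm.
Variables (m : nat) (a : 'I_m -> E).
Hypothesis ha_inj : injective a.
Hypothesis hX : maximal_orthogonal nrm (fun x => exists i, x = a i).

Lemma abs_ge0 (F : fieldType) (ab : F -> R) : nonarch_abs ab -> forall x, 0 <= ab x.
Proof. by case. Qed.
Lemma abs0 (F : fieldType) (ab : F -> R) : nonarch_abs ab -> ab 0 = 0.
Proof. by case=> _ h _ _; apply/h. Qed.
Lemma abs_eq0 (F : fieldType) (ab : F -> R) : nonarch_abs ab -> forall x, ab x = 0 -> x = 0.
Proof. by case=> _ h _ _ x /h. Qed.
Lemma absM (F : fieldType) (ab : F -> R) : nonarch_abs ab -> forall x y, ab (x * y) = ab x * ab y.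
Proof. by case. Qed.
Lemma absU (F : fieldType) (ab : F -> R) : nonarch_abs ab -> forall x y, ab (x + y) <= Num.max (ab x) (ab y).
Proof. by case. Qed.
Lemma abs1 (F : fieldType) (ab : F -> R) : nonarch_abs ab -> ab 1 = 1.
Proof.
move=> h; have h1 : ab 1 != 0 by apply/eqP => /(abs_eq0 h) /eqP; rewrite oner_eq0.
have := absM h 1 1; rewrite mulr1 => e.
by apply: (mulfI h1); rewrite -e mulr1.
Qed.
Lemma absN1 (F : fieldType) (ab : F -> R) : nonarch_abs ab -> ab (-1) = 1.
Proof.
move=> h; have := absM h (-1) (-1); rewrite mulrNN mulr1 abs1 // => e.
have ge := abs_ge0 h (-1).
have : (ab (-1) - 1) * (ab (-1) + 1) = 0 by rewrite mulrDr !mulrBl -e; ring.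
move/eqP; rewrite mulf_eq0 => /orP[/eqP|]; first by move/eqP; rewrite subr_eq0 => /eqP.
rewrite gt_eqF //; exact: ltr_wpDl ge ltr01.
Qed.
Lemma absN (F : fieldType) (ab : F -> R) : nonarch_abs ab -> forall x, ab (- x) = ab x.
Proof. by move=> h x; rewrite -mulN1r absM // absN1 // mul1r. Qed.

Lemma nrm_ge0 x : 0 <= nrm x. Proof. by case: hE. Qed.
Lemma nrm_eq0 x : nrm x = 0 <-> x = 0. Proof. by case: hE. Qed.
Lemma nrmZ l x : nrm (l *: x) = absK l * nrm x. Proof. by case: hE. Qed.
Lemma nrmU x y : nrm (x + y) <= Num.max (nrm x) (nrm y). Proof. by case: hE. Qed.
Lemma nrm0 : nrm 0 = 0. Proof. exact/nrm_eq0. Qed.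
Lemma nrmN x : nrm (- x) = nrm x.
Proof. by rewrite -scaleN1r nrmZ absN1 // mul1r. Qed.
Lemma nrm_gt0 x : x <> 0 -> 0 < nrm x.
Proof. by move=> h; rewrite lt_def nrm_ge0 andbT; apply/eqP => /nrm_eq0. Qed.

Definition t i := nrm (a i).
Lemma a_neq0 i : a i <> 0.
Proof. by case: hX => -[h _] _; apply: h; exists i. Qed.
Lemma t_gt0 i : 0 < t i.
Proof. exact/nrm_gt0/a_neq0. Qed.

Lemma orth_a (c : 'I_m -> K) :
  nrm (\sum_i c i *: a i) = \big[Num.max/0]_i (absK (c i) * t i).
Proof.
case: hX => -[_ h] _; rewrite (h m a c ha_inj) //; last by move=> i; exists i.
by apply: eq_bigr => i _; rewrite nrmZ.
Qed.

Lemma sum_delta i : \sum_j (if i == j then 1 else 0) *: a j = a i.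
Proof.
rewrite (bigD1 i) //= eqxx scale1r big1 ?addr0 // => j ji.
by rewrite eq_sym (negbTE ji) scale0r.
Qed.

Lemma big_opt (T : Type) (op : SemiGroup.com_law T) (x : T) (I : finType) (F : option I -> T) :
  \big[op/x]_(o : option I) F o = op (F None) (\big[op/x]_(i : I) F (Some i)).
Proof.
rewrite (bigD1 None) //=; congr (op _ _).
rewrite (reindex_omap Some id) //=; last by case.
by apply: eq_bigl => i; rewrite eqxx.
Qed.

Lemma key x : x <> 0 -> exists c : 'I_m -> K, nrm (x - \sum_i c i *: a i) < nrm x.
Proof.
move=> x0; case: (pselect (exists c : 'I_m -> K, nrm (x - \sum_i c i *: a i) < nrm x)) => // hn.
have H c : nrm x <= nrm (x - \sum_i c i *: a i).
  by rewrite leNgt; apply/negP => lt; apply: hn; exists c.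
have H2 (lam : K) (c : 'I_m -> K) : nrm (lam *: x + \sum_i c i *: a i) =
    Num.max (absK lam * nrm x) (\big[Num.max/0]_i (absK (c i) * t i)).
  have [->|lam0] := eqVneq lam 0.
    by rewrite scale0r add0r (abs0 hK) mul0r orth_a max_r // bigmax_ge_id.
  set d := \sum_i c i *: a i.
  have ge : nrm (lam *: x) <= nrm (lam *: x + d).
    have -> : lam *: x + d = lam *: (x - \sum_i (- (lam^-1 * c i)) *: a i).
      rewrite (eq_bigr (fun i => - ((lam^-1 * c i) *: a i))); last by move=> i _; rewrite scaleNr.
      rewrite sumrN opprK scalerDr scaler_sumr /d; congr (_ + _).
      by apply: eq_bigr => i _; rewrite scalerA mulrA mulfV // mul1r.
    by rewrite !nrmZ ler_wpM2l // abs_ge0.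
  rewrite -nrmZ -orth_a -/d; case: (ltP (nrm (lam *: x)) (nrm d)) => hl.
    by rewrite addrC (um_strict nrmN nrmU hl).
  apply/le_anti; rewrite ge andbT.
  by apply: le_trans (nrmU _ _) _; rewrite ge_max lexx hl.
have Yo : Defs.orthogonal nrm (fun z => (exists i, z = a i) \/ z = x).
  split; first by move=> z [[i ->]|->]; [exact: a_neq0 | exact: x0].
  move=> n y l yinj yY.
  have : forall k, exists o : option 'I_m, y k = oapp a x o.
    by move=> k; case: (yY k) => [[i ->]|->]; [exists (Some i) | exists None].
  case/fin_all_exists => g yg.
  have ginj : injective g by move=> k1 k2 e; apply: yinj; rewrite !yg e.
  pose L o := \sum_(k | g k == o) l k.
  have Lk k : L (g k) = l k.
    by rewrite /L (big_pred1 k) // => k'; rewrite /= (inj_eq ginj).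
  have L0 o : (forall k, g k != o) -> L o = 0.
    by move=> h; rewrite /L big_pred0 // => k; exact/negbTE/h.
  have -> : \sum_(k < n) l k *: y k = L None *: x + \sum_i L (Some i) *: a i.
    rewrite (eq_bigr (fun k => l k *: oapp a x (g k))); last by move=> k _; rewrite yg.
    rewrite (partition_big g xpredT) //=.
    rewrite (eq_bigr (fun o => L o *: oapp a x o)); last first.
      by move=> o _; rewrite /L scaler_suml; apply: eq_bigr => k /eqP <-.
    by rewrite big_opt.
  rewrite H2.
  pose Phi o := absK (L o) * nrm (oapp a x o).
  have -> : Num.max (absK (L None) * nrm x) (\big[Num.max/0]_i (absK (L (Some i)) * t i))
      = \big[Num.max/0]_o Phi o by rewrite big_opt.
  apply/le_anti/andP; split.
    apply/bigmax_leP; split; first exact: bigmax_ge_id.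
    move=> o _; case: (pselect (exists k, g k = o)) => [[k <-]|no].
      by rewrite /Phi Lk -yg -nrmZ; exact: le_bigmax.
    rewrite /Phi L0 ?abs0 ?mul0r ?bigmax_ge_id //.
    by move=> k; apply/eqP => e; apply: no; exists k.
  apply/bigmax_leP; split; first exact: bigmax_ge_id.
  by move=> k _; rewrite nrmZ yg -Lk; exact: (le_bigmax _ Phi (g k)).
case: hX => _ /(_ _ Yo) hmax.
have [i xi] := hmax (fun z h => or_introl h) x (or_intror erefl).
have := H (fun j => if i == j then 1 else 0).
by rewrite sum_delta -xi subrr nrm0 leNgt nrm_gt0.
Qed.

Definition nrmT (v : 'I_m -> Kv) := \big[Num.max/0]_i (t i * absv (v i)).

Lemma bigmax_scale (I : finType) (c : R) (F : I -> R) : 0 <= c ->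
  \big[Num.max/0]_i (c * F i) = c * \big[Num.max/0]_i F i.
Proof.
move=> c0; apply: (big_ind2 (fun u w => u = c * w)); first by rewrite mulr0.
  by move=> u1 w1 u2 w2 -> ->; rewrite maxr_pMr.
by [].
Qed.

Lemma nrmT_ge0 v : 0 <= nrmT v. Proof. exact: bigmax_ge_id. Qed.
Lemma nrmT_coord v i : t i * absv (v i) <= nrmT v.
Proof. exact: (le_bigmax _ (fun i => t i * absv (v i)) i). Qed.
Lemma nrmT_le v r : 0 <= r -> (forall i, t i * absv (v i) <= r) -> nrmT v <= r.
Proof. by move=> r0 h; apply/bigmax_leP; split. Qed.

Lemma nrmTU v w : nrmT (v + w) <= Num.max (nrmT v) (nrmT w).
Proof.
apply: nrmT_le => [|i]; first by rewrite le_max nrmT_ge0.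
have -> : (v + w) i = v i + w i by [].
apply: le_trans (_ : t i * Num.max (absv (v i)) (absv (w i)) <= _).
  by rewrite ler_wpM2l ?(ltW (t_gt0 i)) // absU.
by rewrite maxr_pMr ?(ltW (t_gt0 i)) // ge_max !le_max !nrmT_coord ?orbT.
Qed.

Lemma nrmTN v : nrmT (- v) = nrmT v.
Proof. by apply: eq_bigr => i _; have -> : (- v) i = - v i by []; rewrite absN. Qed.

Lemma nrmT_scale l v : nrmT (fun i => iota l * v i) = absK l * nrmT v.
Proof.
rewrite /nrmT -bigmax_scale ?abs_ge0 //; apply: eq_bigr => i _.
by rewrite absM // hiota mulrCA.
Qed.

Lemma nrmT0 : nrmT 0 = 0.
Proof. by apply/le_anti; rewrite nrmT_ge0 andbT nrmT_le // => i; rewrite /= abs0 // mulr0. Qed.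

Definition PF := E -> option ('I_m -> Kv).
Definition valid (S : PF) :=
  [/\ forall c : 'I_m -> K, S (\sum_i c i *: a i) = Some (fun i => iota (c i)),
      forall x y v w, S x = Some v -> S y = Some w -> S (x + y) = Some (v + w),
      forall l x v, S x = Some v -> S (l *: x) = Some (fun i => iota l * v i)
    & forall x v, S x = Some v -> nrmT v = nrm x].
Definition ext (S1 S2 : PF) := forall x v, S1 x = Some v -> S2 x = Some v.

Lemma valid0 S : valid S -> S 0 = Some 0.
Proof.
case=> h _ _ _; have := h (fun _ => 0).
rewrite big1 => [|i _]; last by rewrite scale0r.
by move=> ->; congr Some; apply: funext => i; rewrite rmorph0.
Qed.

Lemma validN S x v : valid S -> S x = Some v -> S (- x) = Some (- v).
Proof.
case=> _ _ h _ /(h (-1)); rewrite scaleN1r => ->; congr Some.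
by apply: funext => i; rewrite rmorphN1 mulN1r.
Qed.

Lemma validB S x y v w : valid S -> S x = Some v -> S y = Some w -> S (x - y) = Some (v - w).
Proof. move=> vS hx hy; case: (vS) => _ h _ _; exact/h/validN. Qed.

Lemma coef_uniq (c c' : 'I_m -> K) : \sum_i c i *: a i = \sum_i c' i *: a i -> c = c'.
Proof.
move=> e; have : nrm (\sum_i (c i - c' i) *: a i) = 0.
  rewrite (eq_bigr (fun i => c i *: a i - c' i *: a i)); last by move=> i _; rewrite scalerBl.
  by rewrite sumrB e subrr nrm0.
rewrite orth_a => /eqP; rewrite eq_le => /andP[/bigmax_leP [_ h] _].
apply: funext => i; apply/eqP; rewrite -subr_eq0; apply/eqP/(abs_eq0 hK).
have := h i isT; rewrite pmulr_lle0 ?t_gt0 // => h2.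
by apply/le_anti; rewrite h2 abs_ge0.
Qed.

Definition S0 : PF := fun z =>
  match pselect (exists c : 'I_m -> K, z = \sum_i c i *: a i) with
  | left h => Some (fun i => iota (projT1 (cid h) i))
  | right _ => None
  end.

Lemma S0_Some c : S0 (\sum_i c i *: a i) = Some (fun i => iota (c i)).
Proof.
rewrite /S0; case: pselect => [h|]; last by case; exists c.
case: (cid h) => c' /= e; by rewrite (coef_uniq e).
Qed.

Lemma S0_inv z u : S0 z = Some u -> exists c, z = \sum_i c i *: a i /\ u = (fun i => iota (c i)).
Proof.
rewrite /S0; case: pselect => // h [<-]; case: (cid h) => c /= e; by exists c.
Qed.

Lemma valid_S0 : valid S0.
Proof.
split.
- exact: S0_Some.
- move=> x y v w /S0_inv[c1 [-> ->]] /S0_inv[c2 [-> ->]].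
  rewrite -big_split /=.
  rewrite (eq_bigr (fun i => (c1 i + c2 i) *: a i)); last by move=> i _; rewrite scalerDl.
  by rewrite S0_Some; congr Some; apply: funext => i; rewrite rmorphD.
- move=> l x v /S0_inv[c [-> ->]]; rewrite scaler_sumr.
  rewrite (eq_bigr (fun i => (l * c i) *: a i)); last by move=> i _; rewrite scalerA.
  by rewrite S0_Some; congr Some; apply: funext => i; rewrite rmorphM.
- move=> x v /S0_inv[c [-> ->]]; rewrite orth_a; apply: eq_bigr => i _.
  by rewrite hiota mulrC.
Qed.

Lemma fadd (v w : 'I_m -> Kv) i : (v + w) i = v i + w i. Proof. by []. Qed.
Lemma fopp (v : 'I_m -> Kv) i : (- v) i = - v i. Proof. by []. Qed.

Lemma ball_nest (c1 c2 : Kv) (r1 r2 : R) : absv (c1 - c2) <= Num.max r1 r2 ->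
  (forall z, cball absv c1 r1 z -> cball absv c2 r2 z) \/
  (forall z, cball absv c2 r2 z -> cball absv c1 r1 z).
Proof.
rewrite /cball; case: (leP r1 r2) => h hc.
  left=> z hz; have -> : z - c2 = (z - c1) + (c1 - c2) by rewrite addrA subrK.
  by apply: le_trans (absU hKv _ _) _; rewrite ge_max hc (le_trans hz h).
right=> z hz; have -> : z - c1 = (z - c2) + (c2 - c1) by rewrite addrA subrK.
apply: le_trans (absU hKv _ _) _; rewrite ge_max (le_trans hz (ltW h)) /=.
by rewrite -opprB absN.
Qed.

Lemma step S x : valid S -> S x = None ->
  exists S', valid S' /\ ext S S' /\ S' x <> None.
Proof.
move=> vS Sx.
have : forall i, exists yi : Kv, forall z v, S z = Some v -> t i * absv (yi - v i) <= nrm (x - z).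
  move=> i.
  pose I := {p : E * ('I_m -> Kv) | S p.1 = Some p.2}.
  have := @hKvsc I (fun p => (proj1_sig p).2 i) (fun p => nrm (x - (proj1_sig p).1) / t i).
  case.
  - by constructor; exists (0, 0); exact: valid0.
  - by move=> p; rewrite divr_ge0 ?nrm_ge0 // ltW ?t_gt0.
  - move=> [[z1 v1] /= h1] [[z2 v2] /= h2] /=; apply: ball_nest.
    have h : t i * absv (v1 i - v2 i) <= Num.max (nrm (x - z1)) (nrm (x - z2)).
      apply: le_trans (_ : nrmT (v1 - v2) <= _); first exact: nrmT_coord.
      case: (vS) => _ _ _ iso; rewrite (iso _ _ (validB vS h1 h2)).
      have -> : z1 - z2 = (x - z2) + (- (x - z1)) by rewrite opprB [RHS]addrC addrA subrK.
      by apply: le_trans (nrmU _ _) _; rewrite nrmN maxC.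
    rewrite -maxr_pMl ?invr_ge0 ?(ltW (t_gt0 i)) // ler_pdivlMr ?t_gt0 //.
    by rewrite mulrC.
  - move=> yi hyi; exists yi => z v Szv.
    have := hyi (exist _ (z, v) Szv); rewrite /cball /= ler_pdivlMr ?t_gt0 //.
    by rewrite mulrC.
case/fin_all_exists => y Hy0.
have Hy0' z v : S z = Some v -> nrmT (y - v) <= nrm (x - z).
  by move=> h; apply: nrmT_le => [|i]; [exact: nrm_ge0 | rewrite fadd fopp; exact: Hy0].
have Hy z v : S z = Some v -> nrmT (y - v) = nrm (x - z).
  move=> Szv; have xz0 : x - z <> 0.
    by move/eqP; rewrite subr_eq0 => /eqP ex; move: Sx; rewrite ex Szv.
  have [c hc] := key xz0; set d := \sum_i c i *: a i in hc.
  case: (vS) => hb hadd hsc iso.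
  have Sd := hb c; rewrite -/d in Sd.
  have Szd := hadd _ _ _ _ Szv Sd.
  have h1 := Hy0' _ _ Szd.
  have e1 : x - (z + d) = x - z - d by rewrite opprD addrA.
  rewrite e1 in h1.
  have nd : nrm d = nrm (x - z).
    have -> : d = (x - z) + (- (x - z - d)) by rewrite opprB [RHS]addrC subrK.
    by rewrite (um_strict nrmN nrmU) // nrmN.
  have nw := iso _ _ Sd; rewrite nd in nw.
  have -> : y - v = (fun i => iota (c i)) + (y - (v + (fun i => iota (c i)))).
    by rewrite [RHS]addrC opprD addrA subrK.
  rewrite (um_strict nrmTN nrmTU) // nw; exact: le_lt_trans h1 hc.
pose Spec z u := exists f v (lam : K),
  [/\ S f = Some v, z = f + lam *: x & u = v + (fun i => iota lam * y i)].
have Suniq z u1 u2 : Spec z u1 -> Spec z u2 -> u1 = u2.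
  move=> [f1 [v1 [l1 [h1 -> ->]]]] [f2 [v2 [l2 [h2 e ->]]]].
  have [el|nl] := eqVneq l1 l2.
    move: e; rewrite el => /addIr ef; move: h1; rewrite ef h2 => -[->] //.
  exfalso; have e2 : (l1 - l2) *: x = f2 - f1.
    by rewrite scalerBl -[l1 *: x](addKr f1) e addrA addrK addrC.
  have hx : x = (l1 - l2)^-1 *: (f2 - f1).
    by rewrite -e2 scalerA mulVf ?scale1r // subr_eq0.
  case: (vS) => _ _ hsc _.
  by move: Sx; rewrite hx (hsc _ _ _ (validB vS h2 h1)).
pose S' : PF := fun z => match pselect (exists u, Spec z u) with
  | left h => Some (projT1 (cid h)) | right _ => None end.
have S'_Some z u : Spec z u -> S' z = Some u.
  move=> h; rewrite /S'; case: pselect => [h'|]; last by case; exists u.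
  by case: (cid h') => u' /= h''; rewrite (Suniq _ _ _ h'' h).
have S'_inv z u : S' z = Some u -> Spec z u.
  by rewrite /S'; case: pselect => // h [<-]; case: (cid h).
case: (vS) => hb hadd hsc iso.
have SpecS z v : S z = Some v -> Spec z v.
  move=> h; exists z, v, 0; split => //; first by rewrite scale0r addr0.
  by apply: funext => i; rewrite fadd rmorph0 mul0r addr0.
exists S'; split; last split.
- split.
  + by move=> c; apply: S'_Some; apply: SpecS; apply: hb.
  + move=> z1 z2 u1 u2 /S'_inv [f1 [v1 [l1 [h1 -> ->]]]] /S'_inv [f2 [v2 [l2 [h2 -> ->]]]].
    apply: S'_Some; exists (f1 + f2), (v1 + v2), (l1 + l2); split.
    * exact: hadd.
    * by rewrite scalerDl addrACA.
    * by apply: funext => i; rewrite !fadd rmorphD mulrDl addrACA.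
  + move=> l z u /S'_inv [f [v [lam [h -> ->]]]].
    apply: S'_Some; exists (l *: f), (fun i => iota l * v i), (l * lam); split.
    * exact: hsc.
    * by rewrite scalerDr scalerA.
    * by apply: funext => i; rewrite !fadd rmorphM mulrDr mulrA.
  + move=> z u /S'_inv [f [v [lam [h -> ->]]]].
    have [->|l0] := eqVneq lam 0.
      rewrite scale0r addr0 -(iso _ _ h); congr nrmT.
      by apply: funext => i; rewrite fadd rmorph0 mul0r addr0.
    have h' := hsc (- lam^-1) _ _ h.
    have := Hy _ _ h'.
    have -> : v + (fun i => iota lam * y i) =
        (fun i => iota lam * (y - (fun i => iota (- lam^-1) * v i)) i).
      apply: funext => i; rewrite !fadd fopp mulrBr mulrA -rmorphM mulrN mulfV //.
      by rewrite rmorphN mulNr rmorph1 mul1r opprK addrC.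
    rewrite nrmT_scale => ->; rewrite -nrmZ scalerBr scalerA mulrN mulfV //.
    by rewrite scaleN1r opprK addrC.
- by move=> z v h; apply: S'_Some; apply: SpecS.
- rewrite (S'_Some x (0 + (fun i => iota 1 * y i))) //.
  exists 0, 0, 1; split => //; first exact: valid0.
  by rewrite add0r scale1r.
Qed.

Definition VS := {S : PF | valid S}.
Definition Rl (s1 s2 : VS) : bool := `[< ext (sval s1) (sval s2) >].

Lemma exists_max : exists S, valid S /\ forall x, S x <> None.
Proof.
have [s smax] : exists s : VS, forall s', Rl s s' -> s' = s.
  apply: Zorn.
  - by move=> s; apply/asboolP => x v.
  - by move=> r s u /asboolP h1 /asboolP h2; apply/asboolP => x v /h1/h2.
  - move=> [S1 v1] [S2 v2] /asboolP /= h1 /asboolP /= h2; apply: eq_exist.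
    apply: funext => z; case e1: (S1 z) => [u|]; first by rewrite (h1 _ _ e1).
    by case e2: (S2 z) => [u|] //; rewrite (h2 _ _ e2) in e1.
  move=> A tot; case: (pselect (exists s, A s)) => [[s0 As0]|nA]; last first.
    by exists (exist _ S0 valid_S0) => s As; exfalso; apply: nA; exists s.
  have agree s1 s2 z u1 u2 : A s1 -> A s2 -> sval s1 z = Some u1 -> sval s2 z = Some u2 -> u1 = u2.
    move=> A1 A2 e1 e2; case: (tot _ _ A1 A2) => /asboolP h.
      by move: (h _ _ e1); rewrite e2 => -[].
    by move: (h _ _ e2); rewrite e1 => -[].
  pose U : PF := fun z => match pselect (exists u, exists s, A s /\ sval s z = Some u) with
    | left h => Some (projT1 (cid h)) | right _ => None end.
  have U_Some s z u : A s -> sval s z = Some u -> U z = Some u.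
    move=> As e; rewrite /U; case: pselect => [h|]; last by case; exists u, s.
    by case: (cid h) => u' [s' [As' e']] /=; congr Some; exact: agree As' As e' e.
  have U_inv z u : U z = Some u -> exists s, A s /\ sval s z = Some u.
    by rewrite /U; case: pselect => // h [<-]; case: (cid h).
  have vU : valid U.
    split.
    - by move=> c; apply: (U_Some s0) => //; case: (svalP s0) => hb _ _ _; exact: hb.
    - move=> z1 z2 u1 u2 /U_inv [s1 [A1 e1]] /U_inv [s2 [A2 e2]].
      case: (tot _ _ A1 A2) => /asboolP h.
        apply: (U_Some s2) => //; case: (svalP s2) => _ hadd _ _; exact: hadd (h _ _ e1) e2.
      apply: (U_Some s1) => //; case: (svalP s1) => _ hadd _ _; exact: hadd e1 (h _ _ e2).
    - move=> l z u /U_inv [s1 [A1 e1]]; apply: (U_Some s1) => //.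
      by case: (svalP s1) => _ _ hsc _; exact: hsc.
    - move=> z u /U_inv [s1 [A1 e1]].
      by case: (svalP s1) => _ _ _ iso; exact: iso e1.
  exists (exist _ U vU) => s As; apply/asboolP => z u h; exact: U_Some h.
exists (sval s); split; first exact: svalP.
move=> x e; have [S' [vS' [ext' ne]]] := step (svalP s) e.
have := smax (exist _ S' vS') (asboolT ext').
by move=> es; apply: ne; rewrite -e -es.
Qed.

Lemma main_sec : exists T : E -> 'I_m -> Kv,
    [/\ (forall x y i, T (x + y) i = T x i + T y i),
        (forall (l : K) x i, T (l *: x) i = iota l * T x i),
        (forall x, \big[Num.max/0]_(i < m) (nrm (a i) * absv (T x i)) = nrm x) &
        (forall i j, T (a i) j = if i == j then 1 else 0)].
Proof.
have [S [vS tot]] := exists_max.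
pose T z := if S z is Some v then v else 0.
have TS z : S z = Some (T z).
  by rewrite /T; case e: (S z) => [v|] //; exfalso; exact: tot z e.
case: vS => hb hadd hsc iso.
exists T; split.
- by move=> x y i; have := hadd _ _ _ _ (TS x) (TS y); rewrite TS => -[->].
- by move=> l x i; have := hsc l _ _ (TS x); rewrite TS => -[->].
- by move=> x; exact: iso _ _ (TS x).
- move=> i j; have := hb (fun j => if i == j then 1 else 0).
  rewrite sum_delta TS => -[->] /=.
  by case: (i == j); rewrite ?rmorph1 ?rmorph0.
Qed.

End Main.

Theorem mainTheorem1
  (R : realType)
  (K : fieldType) (absK : K -> R)
  (hK : nonarch_abs absK) (hKnt : nontrivial_abs absK) (hKc : complete_wrt absK)
  (hKnsc : ~ spherically_complete absK)
  (Kv : fieldType) (absv : Kv -> R) (iota : {rmorphism K -> Kv})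
  (hKv : nonarch_abs absv) (hKvsc : spherically_complete absv)
  (hiota : forall d : K, absv (iota d) = absK d)
  (himm : forall x : Kv, x <> 0 -> exists d : K, absv (x - iota d) < absv x)
  (E : lmodType K) (nrm : E -> R)
  (hE : nonarch_norm absK nrm) (hEc : complete_wrt nrm)
  (m : nat) (a : 'I_m -> E) (ha_inj : injective a)
  (hX : maximal_orthogonal nrm (fun x => exists i, x = a i)) :
  exists T : E -> 'I_m -> Kv,
    [/\ (forall x y i, T (x + y) i = T x i + T y i),
        (forall (l : K) x i, T (l *: x) i = iota l * T x i),
        (forall x, \big[Num.max/0]_(i < m) (nrm (a i) * absv (T x i)) = nrm x) &
        (forall i j, T (a i) j = if i == j then 1 else 0)].
Proof. have h := main_sec hK hKv hKvsc hiota hE ha_inj hX. exact h. Qed.
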